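(* Let $p$ be an odd prime, $c\in\mathbb Z_p$ with $c(c^2+1)\not\equiv0\pmod p$. Then $$\Big(\sum_{k=0}^{[p/4]}\binom{4k}{2k}\Big(\frac{c^2}{16(c^2+1)}\Big)^k\Big)\Big(\sum_{k=0}^{[p/4]}\binom{4k}{2k}\frac1{(16(c^2+1))^k}\Big)\equiv\Big(\frac{2(c^2+1)}{p}\Big)\pmod p.$$
   Context: $[x]$ is the greatest integer $\le x$; $\mathbb Z_p$ is the set of rational numbers whose denominator is not divisible by $p$; $(\frac{\cdot}{p})$ is the Legendre symbol. *)

(* Defs.v *)
From HB Require Import structures.
From mathcomp Require Import all_boot all_order all_algebra.
Set Implicit Arguments. Unset Strict Implicit. Unset Printing Implicit Defensive.
Import Order.TTheory GRing.Theory Num.Theory.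
Local Open Scope ring_scope.

(* x is in Z_p : rational whose (reduced) denominator is not divisible by p *)
Definition pint (p : nat) (x : rat) : bool := ~~ (p %| `|denq x|)%N.

Definition congr_p (p : nat) (x y : rat) : bool := pint p ((x - y) / p%:R).

Definition legendre (p : nat) (a : rat) : int :=
  if congr_p p a 0 then 0
  else if [exists x : 'I_p, congr_p p ((nat_of_ord x)%:R ^+ 2) a] then 1
  else -1.

(* Main.v *)
Require Import Defs.
From HB Require Import structures.
From mathcomp Require Import all_boot all_order all_algebra.
From mathcomp Require Import all_field.
From mathcomp Require Import ring zify.
Import Order.TTheory GRing.Theory Num.Theory.
Set Implicit Arguments. Unset Strict Implicit. Unset Printing Implicit Defensive.
Local Open Scope ring_scope.
Lemma frobD (L : fieldType) p (h : p \in [pchar L]) (x y : L) :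
  (x + y) ^+ p = x ^+ p + y ^+ p.
Proof. exact: (pFrobenius_autD_comm h (mulrC x y)). Qed.

Lemma frobM (L : fieldType) p (x y : L) : (x * y) ^+ p = x ^+ p * y ^+ p.
Proof. exact: exprMn. Qed.

Lemma frobN (L : fieldType) p (h : p \in [pchar L]) (x : L) :
  (- x) ^+ p = - x ^+ p.
Proof. exact: (pFrobenius_autN h x). Qed.

Lemma frob1 (L : fieldType) p (x : L) : 1 ^+ p = 1 :> L.
Proof. exact: expr1n. Qed.

Lemma frob_nat (L : fieldType) p (h : p \in [pchar L]) m :
  (m%:R : L) ^+ p = m%:R.
Proof.
elim: m => [|m IH]; first by rewrite expr0n /= gtn_eqF // prime_gt0 // (pcharf_prime h).
by rewrite -addn1 natrD frobD // IH expr1n.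
Qed.

Lemma natf_neq0 (L : fieldType) p (h : p \in [pchar L]) m :
  ~~ (p %| m)%N -> (m%:R : L) != 0.
Proof. by rewrite (dvdn_pcharf h). Qed.

Lemma gam_pow (L : fieldType) p n (h : p \in [pchar L]) (g : L) :
  p = (2 * n).+1 -> g != 0 -> g ^+ (2 * n) = g ^+ p / g.
Proof. by move=> -> g0; rewrite exprS mulrAC mulfV // mul1r. Qed.

Lemma stepc (L : fieldType) p n (h : p \in [pchar L]) (c r : L) :
  p = (2 * n).+1 -> c ^+ p = c -> c != 0 -> c ^+ 2 + 1 != 0 ->
  r ^+ 2 = c ^+ 2 + 1 ->
  ((r + c) ^+ n + (r - c) ^+ n) * ((r + 1) ^+ n + (r - 1) ^+ n) = 4 * 2 ^+ n.
Proof.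
move=> hp hc c0 s0 hr.
have pr := pcharf_prime h.
have p2 : ~~ (p %| 2)%N.
  have p1 := prime_gt1 pr; rewrite hp in p1 *.
  by apply/negP => /dvdn_leq H; have := H isT; lia.
have two0 : (2 : L) != 0 by have := natf_neq0 h p2.
set s := c ^+ 2 + 1.
have hrp : r ^+ p = s ^+ n * r by rewrite hp exprS mulrC exprM hr.
have hsp : s ^+ p = s by rewrite /s frobD // -exprM mulnC exprM hc expr1n.
have s0' : s ^+ n != 0 by rewrite expf_neq0.
have heps : s ^+ n * s ^+ n = 1.
  have H : s ^+ (2 * n) = 1 by apply: (mulIf s0); rewrite mul1r -exprSr -hp hsp.
  by rewrite -exprD addnn -mul2n.
set e := s ^+ n in hrp heps s0'.
have h2 : (2 : L) ^+ p = 2 by have := frob_nat h 2.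
set h2i := (2 : L)^-1.
have hh : h2i ^+ p = h2i by rewrite /h2i exprVn h2.
pose g1 := (r + c + 1) * h2i. pose g2 := (r - c - 1) * h2i.
pose g3 := (r + c - 1) * h2i. pose g4 := (r - c + 1) * h2i.
have four0 : (4 : L) != 0.
  by rewrite (_ : 4 = 2 * 2) ?mulf_neq0 //; ring.
have Es : forall x y : L, x = y + (r ^+ 2 - s) / 2 -> x = y.
  by move=> x y ->; rewrite hr subrr mul0r addr0.
have E1 : (r + c) * (r + 1) = 2 * g1 ^+ 2 by apply: Es; rewrite /g1 /h2i /s; field; rewrite ?four0 ?two0 ?c0.
have E2 : (r - c) * (r - 1) = 2 * g2 ^+ 2 by apply: Es; rewrite /g2 /h2i /s; field; rewrite ?four0 ?two0 ?c0.
have E3 : (r + c) * (r - 1) = 2 * g3 ^+ 2 by apply: Es; rewrite /g3 /h2i /s; field; rewrite ?four0 ?two0 ?c0.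
have E4 : (r - c) * (r + 1) = 2 * g4 ^+ 2 by apply: Es; rewrite /g4 /h2i /s; field; rewrite ?four0 ?two0 ?c0.
have P12 : g1 * g2 = - c / 2.
  rewrite (_ : g1 * g2 = - c / 2 + (r ^+ 2 - s) / 4); first by rewrite hr subrr mul0r addr0.
  by rewrite /g1 /g2 /h2i /s; field; rewrite ?four0 ?two0 ?c0.
have P34 : g3 * g4 = c / 2.
  rewrite (_ : g3 * g4 = c / 2 + (r ^+ 2 - s) / 4); first by rewrite hr subrr mul0r addr0.
  by rewrite /g3 /g4 /h2i /s; field; rewrite ?four0 ?two0 ?c0.
have nz12 : g1 * g2 != 0 by rewrite P12 mulf_neq0 ?oppr_eq0 ?invr_eq0.
have nz34 : g3 * g4 != 0 by rewrite P34 mulf_neq0 ?oppr_eq0 ?invr_eq0.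
have [g1n g2n] : g1 != 0 /\ g2 != 0 by move: nz12; rewrite mulf_eq0 => /norP.
have [g3n g4n] : g3 != 0 /\ g4 != 0 by move: nz34; rewrite mulf_eq0 => /norP.
have F1 : g1 ^+ p = (e * r + c + 1) * h2i
  by rewrite /g1 frobM !(frobD h) hrp hc expr1n hh.
have F2 : g2 ^+ p = (e * r - c - 1) * h2i
  by rewrite /g2 frobM !(frobD h) !(frobN h) hrp hc expr1n hh.
have F3 : g3 ^+ p = (e * r + c - 1) * h2i
  by rewrite /g3 frobM !(frobD h) !(frobN h) hrp hc expr1n hh.
have F4 : g4 ^+ p = (e * r - c + 1) * h2i
  by rewrite /g4 frobM !(frobD h) !(frobN h) hrp hc expr1n hh.
have -> : ((r + c) ^+ n + (r - c) ^+ n) * ((r + 1) ^+ n + (r - 1) ^+ n)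
   = 2 ^+ n * (g1 ^+ (2 * n) + g2 ^+ (2 * n) + g3 ^+ (2 * n) + g4 ^+ (2 * n)).
  have X (x : L) : (2 * x ^+ 2) ^+ n = 2 ^+ n * x ^+ (2 * n) by rewrite exprMn exprM.
  rewrite !mulrDl !mulrDr -!exprMn E1 E2 E3 E4 !X; ring.
rewrite !(gam_pow h hp) // F1 F2 F3 F4.
have : (e - 1) * (e + 1) = 0 by rewrite mulrBl !mulrDr heps; ring.
move=> /eqP; rewrite mulf_eq0 subr_eq0 addr_eq0 => /orP [] /eqP ->.
  rewrite mul1r -/g1 -/g2 -/g3 -/g4 !mulfV //; ring.
have -> : (-1 * r + c + 1) * h2i = - g2 by rewrite /g2; ring.
have -> : (-1 * r - c - 1) * h2i = - g1 by rewrite /g1; ring.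
have -> : (-1 * r + c - 1) * h2i = - g4 by rewrite /g4; ring.
have -> : (-1 * r - c + 1) * h2i = - g3 by rewrite /g3; ring.
have -> : - g2 / g1 + - g1 / g2 + - g4 / g3 + - g3 / g4
   = - (g1 ^+ 2 + g2 ^+ 2) / (g1 * g2) - (g3 ^+ 2 + g4 ^+ 2) / (g3 * g4) by field; rewrite ?four0 ?two0 ?c0 ?g1n ?g2n ?g3n ?g4n.
have -> : g1 ^+ 2 + g2 ^+ 2 = (r ^+ 2 + (c + 1) ^+ 2) / 2 by rewrite /g1 /g2 /h2i; field; rewrite ?four0 ?two0 ?c0.
have -> : g3 ^+ 2 + g4 ^+ 2 = (r ^+ 2 + (c - 1) ^+ 2) / 2 by rewrite /g3 /g4 /h2i; field; rewrite ?four0 ?two0 ?c0.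
by rewrite P12 P34 hr; field; rewrite ?four0 ?two0 ?oppr_eq0 ?c0.
Qed.

Lemma sum_pairs (L : fieldType) (F : nat -> L) m :
  \sum_(0 <= i < (2 * m)) F i = \sum_(0 <= k < m) (F (2 * k)%N + F (2 * k).+1).
Proof.
elim: m => [|m IH]; first by rewrite !big_geq.
rewrite [RHS]big_nat_recr //= -IH (_ : (2 * m.+1 = (2 * m).+2)%N); last by lia.
by rewrite big_nat_recr //= big_nat_recr //= addrA.
Qed.

Lemma stepb (L : fieldType) n q (y r : L) : (n = 2 * q \/ n = (2 * q).+1)%N -> r != 0 ->
  (r + y) ^+ n + (r - y) ^+ n
  = 2 * r ^+ n * \sum_(0 <= k < q.+1) ('C(n, 2 * k))%:R * (y ^+ 2 / r ^+ 2) ^+ k.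
Proof.
move=> hn r0.
pose F i := r ^+ (n - i) * y ^+ i * (1 + (-1) ^+ i) *+ 'C(n, i).
have -> : (r + y) ^+ n + (r - y) ^+ n = \sum_(0 <= i < (2 * q.+1)) F i.
  have -> : \sum_(0 <= i < (2 * q.+1)) F i = \sum_(0 <= i < n.+1) F i.
    case: hn => hn'.
      rewrite (_ : (2 * q.+1 = (2 * q).+1.+1)%N); last by lia.
      rewrite big_nat_recr //= [F (2 * q).+1]/F bin_small; last by lia.
      by rewrite mulr0n addr0 hn'.
    by rewrite hn'; congr (\sum_(0 <= i < _) _); lia.
  rewrite exprDn (exprDn r (- y)) -big_split big_mkord /=.
  apply: eq_bigr => i _; rewrite /F -mulrnDl; congr (_ *+ _).
  by rewrite -(mulN1r y) exprMn; ring.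
rewrite sum_pairs big_distrr /=.
apply: eq_big_nat => k /andP [_ hk].
have hk2 : (2 * k <= n)%N by case: hn => ->; lia.
have m1 : (-1 : L) ^+ (2 * k) = 1 by rewrite exprM sqrrN !expr1n.
have m2 : (-1 : L) ^+ (2 * k).+1 = -1 by rewrite exprS m1 mulr1.
rewrite /F m2 m1 subrr mulr0 mul0rn addr0.
rewrite -mulr_natl.
have -> : r ^+ n = r ^+ (n - 2 * k) * (r ^+ 2) ^+ k by rewrite -exprM -exprD subnK.
rewrite exprM.
have rk : (r ^+ 2) ^+ k != 0 by rewrite !expf_neq0.
rewrite expr_div_n.
field; done.
Qed.

Lemma central_bin_nat m : (m.+1 * 'C((2 * m.+1), m.+1) = 2 * (2 * m).+1 * 'C(2 * m, m))%N.
Proof.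
have e1 := mul_bin_diag (2 * m).+2 m.
have e2 := mul_bin_diag (2 * m).+1 m.
have e3 : 'C((2 * m).+1, m.+1) = 'C((2 * m).+1, m).
  by rewrite -bin_sub; [congr 'C(_, _); lia | lia].
rewrite /= in e1 e2; rewrite e3 in e2.
apply/eqP; rewrite -(eqn_pmul2l (ltn0Sn m)); apply/eqP.
rewrite (_ : (2 * m.+1 = (2 * m).+2)%N); last by lia.
rewrite -e1 mulnCA -e2; nia.
Qed.

Lemma stepa (L : fieldType) p n (h : p \in [pchar L]) : p = (2 * n).+1 ->
  forall m, (m <= n)%N -> ('C(2 * m, m))%:R = ('C(n, m))%:R * (-4) ^+ m :> L.
Proof.
move=> hp; elim => [|m IH] hm; first by rewrite !bin0 expr0 mulr1.
have hmn : (m.+1 < p)%N by lia.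
have m0 : (m.+1%:R : L) != 0.
  rewrite -(dvdn_pcharf h); apply/negP => /dvdn_leq H; have := H isT; lia.
apply: (mulfI m0).
have pz : ((2 * n).+1%:R : L) = 0 by rewrite -hp; apply/eqP; rewrite -(dvdn_pcharf h).
rewrite -natrM central_bin_nat natrM IH; last by lia.
rewrite [RHS]mulrA -natrM mul_bin_left !natrM natrB; last by lia.
have two0 : (2 : L) != 0.
  have pr := pcharf_prime h; have p1 := prime_gt1 pr.
  have p2 : ~~ (p %| 2)%N.
    by rewrite hp in p1 *; apply/negP => /dvdn_leq H; have := H isT; lia.
  by have := natf_neq0 h p2.
have HN : (n%:R : L) = - 1 / 2.
  apply: (mulfI two0); move: pz; rewrite -addn1 natrD natrM => /eqP.
  by rewrite addr_eq0 => /eqP ->; field.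
by rewrite HN -[(2 * m).+1]addn1 natrD natrM exprS; field.
Qed.

Lemma mainL (L : fieldType) p n (h : p \in [pchar L]) (c r : L) :
  p = (2 * n).+1 -> c ^+ p = c -> c != 0 -> c ^+ 2 + 1 != 0 -> r ^+ 2 = c ^+ 2 + 1 ->
  (\sum_(0 <= k < (p %/ 4).+1) ('C(4 * k, 2 * k))%:R
        * (c ^+ 2 / (16 * (c ^+ 2 + 1))) ^+ k)
     * (\sum_(0 <= k < (p %/ 4).+1) ('C(4 * k, 2 * k))%:R
        / (16 * (c ^+ 2 + 1)) ^+ k) = 2 ^+ n * (c ^+ 2 + 1) ^+ n.
Proof.
move=> hp hc c0 s0 hr.
set q := (p %/ 4)%N.
have hn : (n = 2 * q \/ n = (2 * q).+1)%N by rewrite /q hp; lia.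
have r0 : r != 0 by apply: contraNneq s0 => r0; rewrite -hr r0 expr0n.
have pr := pcharf_prime h; have p1 := prime_gt1 pr.
have p2 : ~~ (p %| 2)%N.
  by rewrite hp in p1 *; apply/negP => /dvdn_leq H; have := H isT; lia.
have two0 : (2 : L) != 0 by have := natf_neq0 h p2.
have b16 k : (k < q.+1)%N -> ('C(4 * k, 2 * k))%:R = ('C(n, 2 * k))%:R * 16 ^+ k :> L.
  move=> hk; rewrite (_ : (4 * k = 2 * (2 * k))%N); last by lia.
  rewrite (stepa h hp); last by case: hn; lia.
  by rewrite exprM; congr (_ * _ ^+ _); ring.
have sixt0 : (16 : L) != 0 by rewrite (_ : 16 = 2 ^+ 4); [rewrite expf_neq0 | ring].
have S1 : \sum_(0 <= k < q.+1) ('C(4 * k, 2 * k))%:R * (c ^+ 2 / (16 * (c ^+ 2 + 1))) ^+ k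
   = \sum_(0 <= k < q.+1) ('C(n, 2 * k))%:R * (c ^+ 2 / r ^+ 2) ^+ k.
  apply: eq_big_nat => k /andP [_ hk]; rewrite b16 // hr -mulrA -exprMn; congr (_ * _ ^+ _).
  by field; rewrite sixt0 s0.
have S2 : \sum_(0 <= k < q.+1) ('C(4 * k, 2 * k))%:R / (16 * (c ^+ 2 + 1)) ^+ k
   = \sum_(0 <= k < q.+1) ('C(n, 2 * k))%:R * (1 ^+ 2 / r ^+ 2) ^+ k.
  apply: eq_big_nat => k /andP [_ hk]; rewrite b16 // hr -mulrA -exprVn -exprMn.
  by congr (_ * _ ^+ _); field; rewrite sixt0 s0.
rewrite S1 S2.
have := stepc h hp hc c0 s0 hr.
rewrite (stepb c hn r0) (stepb 1 hn r0).
have hrn : r ^+ n * r ^+ n = (c ^+ 2 + 1) ^+ n by rewrite -exprMn -expr2 hr.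
have sn0 : (c ^+ 2 + 1) ^+ n != 0 by rewrite expf_neq0.
set A := \sum_(0 <= k < q.+1) _. set B := \sum_(0 <= k < q.+1) _.
move=> H.
have : 4 * ((c ^+ 2 + 1) ^+ n * (A * B)) = 4 * 2 ^+ n by rewrite -H -hrn; ring.
have four0 : (4 : L) != 0 by rewrite (_ : 4 = 2 * 2) ?mulf_neq0 //; ring.
move/(mulfI four0) => H2.
have hsp : (c ^+ 2 + 1) ^+ p = c ^+ 2 + 1.
  by rewrite (frobD h) -exprM mulnC exprM hc expr1n.
have heps : (c ^+ 2 + 1) ^+ n * (c ^+ 2 + 1) ^+ n = 1.
  have H3 : (c ^+ 2 + 1) ^+ (2 * n) = 1 by apply: (mulIf s0); rewrite mul1r -exprSr -hp hsp.
  by rewrite -exprD addnn -mul2n.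
by rewrite -H2 mulrAC heps mul1r.
Qed.

Lemma sqrt_ext p (pp : prime p) (a : 'F_p) (P : Prop) :
  (forall (L : fieldExtType 'F_p) (t : L), t ^+ 2 = a%:A -> P) -> P.
Proof.
move=> HP.
have sz : size ('X^2 - a%:P : {poly 'F_p}) = 3%N.
  by rewrite size_polyDl ?size_polyXn // size_polyN size_polyC; case: (a != 0).
have nz : ('X^2 - a%:P : {poly 'F_p}) != 0 by rewrite -size_poly_eq0 sz.
have [L [rs Hrs _]] := FinSplittingFieldFor nz.
move: Hrs; rewrite rmorphB /= map_polyXn map_polyC /=.
case: rs => [|z rs] Hrs.
  move/eqp_size: Hrs; rewrite big_nil size_poly1.
  by rewrite size_polyDl ?size_polyXn // size_polyN size_polyC; case: (_ != 0).
apply: (HP L z).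
have : root ('X^2 - (a%:A)%:P) z by rewrite (eqp_root Hrs) root_prod_XsubC mem_head.
by rewrite /root !hornerE subr_eq0 => /eqP.
Qed.

Lemma Fp_fix p (pp : prime p) (y : 'F_p) : y ^+ p = y.
Proof. by have := expf_card y; rewrite card_Fp. Qed.

Lemma Fp_sq_pow p n (pp : prime p) (hp : p = (2 * n).+1) (y : 'F_p) :
  y != 0 -> y ^+ (2 * n) = 1.
Proof. by move=> y0; apply: (mulIf y0); rewrite mul1r -exprSr -hp Fp_fix. Qed.

Lemma Fp_ord p (pp : prime p) (b : 'F_p) : exists x : 'I_p, (x%:R : 'F_p) = b.
Proof.
case: b => m hm; have hm' : (m < p)%N by rewrite Fp_cast in hm.
exists (Ordinal hm'); apply: val_inj => /=.
by rewrite val_Fp_nat // modn_small.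
Qed.

Lemma euler1 p n (pp : prime p) (hp : p = (2 * n).+1) (a : 'F_p) : a != 0 ->
  (exists x : 'I_p, (x%:R : 'F_p) ^+ 2 = a) -> a ^+ n = 1.
Proof.
move=> a0 [x hx]; rewrite -hx -exprM Fp_sq_pow //.
by apply: contraNneq a0 => x0; rewrite -hx x0 expr0n.
Qed.

Lemma pow_odd (R : comRingType) (t u : R) m k : k = (2 * m).+1 -> t ^+ 2 = u ->
  u ^+ m = 1 -> t ^+ k = t.
Proof. by move=> -> ht hu; rewrite exprS mulrC exprM ht hu mul1r. Qed.

Lemma euler2 p n (pp : prime p) (hp : p = (2 * n).+1) (a : 'F_p) : a != 0 ->
  ~ (exists x : 'I_p, (x%:R : 'F_p) ^+ 2 = a) -> a ^+ n = -1.
Proof.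
move=> a0 nex.
have : (a ^+ n - 1) * (a ^+ n + 1) = 0.
  by rewrite mulrBl !mulrDr -exprD addnn -mul2n Fp_sq_pow //; ring.
move/eqP; rewrite mulf_eq0 subr_eq0 addr_eq0 => /orP [] /eqP // an1.
exfalso; apply: (sqrt_ext pp (a := a)) => L t ht.
have tp : t ^+ p = t.
  by apply: (pow_odd hp ht); have := rmorphXn (in_alg L) n a; rewrite /= => <-; rewrite an1 scale1r.
have Lfix (b : 'F_p) : (b%:A : L) ^+ p = b%:A.
  by have := rmorphXn (in_alg L) p b; rewrite /= => <-; rewrite Fp_fix.
pose Q : {poly L} := 'X^p - 'X.
have p1 := prime_gt1 pp.
have szQ : size Q = p.+1.
  by rewrite /Q size_polyDl ?size_polyXn // size_polyN size_polyX.
have Q0 : Q != 0 by rewrite -size_poly_eq0 szQ.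
have rQ (x : L) : x ^+ p = x -> root Q x by move=> hx; rewrite /root /Q !hornerE hx subrr.
case: (boolP (t \in map (in_alg L) (enum 'F_p))) => tin.
  move/mapP: tin => [b _ tb]; apply: nex.
  have [x hx] := Fp_ord pp b; exists x; rewrite hx.
  by apply: (fmorph_inj (in_alg L)); rewrite rmorphXn; subst t; exact: ht.
have := max_poly_roots Q0 (rs := t :: map (in_alg L) (enum 'F_p)).
rewrite szQ /= size_map -cardE card_Fp // ltnn tin /=.
rewrite (map_inj_uniq (fmorph_inj (in_alg L))) enum_uniq rQ //.
have -> : all (root Q) (map (in_alg L) (enum 'F_p)).
  by apply/allP => x /mapP [b _ ->]; apply: rQ; exact: Lfix.
by move=> /(_ isT isT).
Qed.

Definition red p (x : rat) : 'F_p := (numq x)%:~R / (denq x)%:~R.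

Lemma Fp_int0 p (pp : prime p) (z : int) : ((z%:~R : 'F_p) == 0) = (p %| `|z|)%N.
Proof. by rewrite -(dvdz_pcharf (pchar_Fp pp)). Qed.

Lemma pint_frac p (pp : prime p) (a b : int) : ~~ (p %| `|b|)%N -> pint p (a%:~R / b%:~R).
Proof.
move=> hb; set x := _ / _.
have b0 : b != 0 by apply: contraNneq hb => ->.
have e : (numq x * b = a * denq x)%R.
  apply: (@intr_inj rat); rewrite !intrM numqE /x; field.
  by rewrite intr_eq0 b0.
rewrite /pint; apply/negP => hd.
have : (p %| `|numq x| * `|b|)%N by rewrite -abszM e abszM dvdn_mull.
rewrite Euclid_dvdM // (negbTE hb) orbF => hn.
have := coprime_num_den x; rewrite /coprime => /eqP g1.
have : (p %| gcdn `|numq x| `|denq x|)%N by rewrite dvdn_gcd hn hd.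
by rewrite g1 dvdn1 => /eqP p1; rewrite p1 in pp.
Qed.

Lemma pint_den p (x : rat) : pint p x -> ~~ (p %| `|denq x|)%N.
Proof. by []. Qed.

Lemma red_frac p (pp : prime p) (a b : int) : ~~ (p %| `|b|)%N ->
  red p (a%:~R / b%:~R) = a%:~R / b%:~R.
Proof.
move=> hb; have := pint_frac pp a hb; set x := _ / _ => hx.
have b0 : b != 0 by apply: contraNneq hb => ->.
have e : (numq x * b = a * denq x)%R.
  apply: (@intr_inj rat); rewrite !intrM numqE /x; field.
  by rewrite intr_eq0 b0.
have B0 : (b%:~R : 'F_p) != 0 by rewrite Fp_int0.
have D0 : ((denq x)%:~R : 'F_p) != 0 by rewrite Fp_int0.
rewrite /red; apply: (mulIf B0); apply: (mulIf D0).
by rewrite (divfK B0) mulrAC (divfK D0) -!intrM e.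
Qed.

Lemma ratE (x : rat) : x = (numq x)%:~R / (denq x)%:~R.
Proof. by rewrite divq_num_den. Qed.

Lemma den_neq0 (x : rat) : ((denq x)%:~R : rat) != 0.
Proof. by rewrite intr_eq0 denq_neq0. Qed.

Lemma ndvd_mul p (pp : prime p) (a b : int) : ~~ (p %| `|a|)%N -> ~~ (p %| `|b|)%N ->
  ~~ (p %| `|(a * b)%R|)%N.
Proof. by move=> ha hb; rewrite abszM Euclid_dvdM // negb_or ha hb. Qed.

Lemma red_add p (pp : prime p) x y : pint p x -> pint p y ->
  pint p (x + y) /\ red p (x + y) = red p x + red p y.
Proof.
move=> hx hy.
have e : x + y = (numq x * denq y + numq y * denq x)%:~R / (denq x * denq y)%:~R.
  rewrite {1}(ratE x) {1}(ratE y) intrD !intrM; field.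
  by rewrite !den_neq0.
have hd := ndvd_mul pp hx hy.
rewrite e red_frac // pint_frac //; split => //.
have D1 : ((denq x)%:~R : 'F_p) != 0 by rewrite Fp_int0.
have D2 : ((denq y)%:~R : 'F_p) != 0 by rewrite Fp_int0.
by rewrite /red intrD !intrM; field; rewrite D1 D2.
Qed.

Lemma red_mul p (pp : prime p) x y : pint p x -> pint p y ->
  pint p (x * y) /\ red p (x * y) = red p x * red p y.
Proof.
move=> hx hy.
have e : x * y = (numq x * numq y)%:~R / (denq x * denq y)%:~R.
  rewrite {1}(ratE x) {1}(ratE y) !intrM; field.
  by rewrite !den_neq0.
have hd := ndvd_mul pp hx hy.
rewrite e red_frac // pint_frac //; split => //.
have D1 : ((denq x)%:~R : 'F_p) != 0 by rewrite Fp_int0.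
have D2 : ((denq y)%:~R : 'F_p) != 0 by rewrite Fp_int0.
by rewrite /red !intrM; field; rewrite D1 D2.
Qed.

Lemma red_opp p (pp : prime p) x : pint p x ->
  pint p (- x) /\ red p (- x) = - red p x.
Proof.
move=> hx.
have e : - x = (- numq x)%:~R / (denq x)%:~R by rewrite {1}(ratE x) intrN mulNr.
rewrite e red_frac // pint_frac //; split => //.
by rewrite /red intrN mulNr.
Qed.

Lemma red_int p (pp : prime p) (z : int) : pint p z%:~R /\ red p z%:~R = z%:~R.
Proof.
have e : (z%:~R : rat) = z%:~R / (1%:~R) by rewrite divr1.
have h1 : ~~ (p %| `|(1 : int)|)%N by rewrite dvdn1; case: p pp => [|[|]].
by rewrite e red_frac // pint_frac // divr1.
Qed.

Lemma red_nat p (pp : prime p) (m : nat) : pint p m%:R /\ red p m%:R = m%:R.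
Proof. by have := red_int pp m; rewrite !pmulrn. Qed.

Lemma red_inv p (pp : prime p) x : pint p x -> red p x != 0 ->
  pint p (x^-1) /\ red p (x^-1) = (red p x)^-1.
Proof.
move=> hx r0.
have N0 : ((numq x)%:~R : 'F_p) != 0 by apply: contraNneq r0; rewrite /red => ->; rewrite mul0r.
have hn : ~~ (p %| `|numq x|)%N by rewrite -Fp_int0.
have n0 : numq x != 0 by apply: contraNneq N0 => ->.
have e : x^-1 = (denq x)%:~R / (numq x)%:~R.
  rewrite {1}(ratE x) invf_div //.
rewrite e red_frac // pint_frac //; split => //.
by rewrite /red invf_div.
Qed.

Lemma red_exp p (pp : prime p) x k : pint p x ->
  pint p (x ^+ k) /\ red p (x ^+ k) = red p x ^+ k.
Proof.
move=> hx; elim: k => [|k [IH1 IH2]]; first by rewrite !expr0; exact: (red_nat pp 1).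
by have [h1 h2] := red_mul pp hx IH1; rewrite !exprS h2 IH2.
Qed.

Lemma red_sum p (pp : prime p) (F : nat -> rat) m : (forall k, pint p (F k)) ->
  pint p (\sum_(0 <= k < m) F k) /\
  red p (\sum_(0 <= k < m) F k) = \sum_(0 <= k < m) red p (F k).
Proof.
move=> hF; elim: m => [|m [IH1 IH2]]; first by rewrite !big_geq //; exact: (red_nat pp 0).
rewrite !big_nat_recr //=.
by have [h1 h2] := red_add pp IH1 (hF m); rewrite h2 IH2.
Qed.

Lemma congr_red p (pp : prime p) x y : pint p x -> pint p y ->
  congr_p p x y = (red p x == red p y).
Proof.
move=> hx hy.
have [hz ez] := red_add pp hx (proj1 (red_opp pp hy)).
rewrite (proj2 (red_opp pp hy)) in ez.
rewrite -subr_eq0 -ez /congr_p.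
move: hz; set z := x - y => hz.
have p0 : (p%:R : rat) != 0 by rewrite pnatr_eq0 -lt0n prime_gt0.
apply/idP/idP.
  move=> hw; have [_ hm] := red_mul pp hw (proj1 (red_nat pp p)).
  by rewrite divfK // in hm; rewrite hm (proj2 (red_nat pp p)) pchar_Fp_0 // mulr0.
have D0 : ((denq z)%:~R : 'F_p) != 0 by rewrite Fp_int0.
rewrite /red mulf_eq0 invr_eq0 (negbTE D0) orbF Fp_int0 // => /dvdnP [m hm].
have e : z / p%:R = (sgz (numq z) * m)%:~R / (denq z)%:~R.
  have hN : numq z = sgz (numq z) * (m * p)%N by rewrite {1}[numq z]intEsg hm.
  rewrite {1}(ratE z) {1}hN PoszM !intrM -!pmulrn; field.
  by rewrite den_neq0 p0.
by rewrite e pint_frac.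
Qed.

Lemma mainFp p n (pp : prime p) (hp : p = (2 * n).+1) (c : 'F_p) :
  c != 0 -> c ^+ 2 + 1 != 0 ->
  (\sum_(0 <= k < (p %/ 4).+1) ('C(4 * k, 2 * k))%:R
        * (c ^+ 2 / (16 * (c ^+ 2 + 1))) ^+ k)
     * (\sum_(0 <= k < (p %/ 4).+1) ('C(4 * k, 2 * k))%:R
        / (16 * (c ^+ 2 + 1)) ^+ k) = 2 ^+ n * (c ^+ 2 + 1) ^+ n.
Proof.
move=> c0 s0.
apply: (sqrt_ext pp (a := c ^+ 2 + 1)) => L t ht.
apply: (fmorph_inj (in_alg L)).
have h : p \in [pchar L] by rewrite pchar_lalg pchar_Fp.
rewrite rmorphM !rmorph_sum.
set cL : L := in_alg L c.
have hc : cL ^+ p = cL by rewrite -rmorphXn Fp_fix.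
have cL0 : cL != 0 by rewrite fmorph_eq0.
have sL : cL ^+ 2 + 1 = in_alg L (c ^+ 2 + 1) by rewrite rmorphD rmorphXn rmorph1.
have sL0 : cL ^+ 2 + 1 != 0 by rewrite sL fmorph_eq0.
rewrite (eq_bigr (fun k => ('C(4 * k, 2 * k))%:R * (cL ^+ 2 / (16 * (cL ^+ 2 + 1))) ^+ k)); last first.
  move=> i _; rewrite !(rmorphM (in_alg L)) !(rmorph_nat (in_alg L)) !(rmorphXn (in_alg L)).
  by rewrite (fmorph_div (in_alg L)) !(rmorphM (in_alg L)) !(rmorph_nat (in_alg L)) sL.
rewrite [X in _ * X](eq_bigr (fun k => ('C(4 * k, 2 * k))%:R / (16 * (cL ^+ 2 + 1)) ^+ k)); last first.
  move=> i _; rewrite (fmorph_div (in_alg L)) !(rmorph_nat (in_alg L)) !(rmorphXn (in_alg L)).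
  by rewrite !(rmorphM (in_alg L)) !(rmorph_nat (in_alg L)) sL.
rewrite (mainL h hp hc cL0 sL0 (r := t)); last by rewrite ht sL.
by rewrite !(rmorphM (in_alg L)) !(rmorphXn (in_alg L)) !(rmorph_nat (in_alg L)) sL.
Qed.

Lemma red_one p (pp : prime p) : pint p 1 /\ red p 1 = 1.
Proof. exact: (red_nat pp 1). Qed.

Lemma red_zero p (pp : prime p) : pint p 0 /\ red p 0 = 0.
Proof. exact: (red_nat pp 0). Qed.

Unset Implicit Arguments.

Theorem corollary2p1 (p : nat) (c : rat) :
  prime p -> odd p -> pint p c -> ~~ congr_p p (c * (c ^+ 2 + 1)) 0 ->
  congr_p p
    ((\sum_(0 <= k < (p %/ 4).+1) ('C(4 * k, 2 * k))%:R
        * (c ^+ 2 / (16 * (c ^+ 2 + 1))) ^+ k)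
     * (\sum_(0 <= k < (p %/ 4).+1) ('C(4 * k, 2 * k))%:R
        / (16 * (c ^+ 2 + 1)) ^+ k))
    ((legendre p (2 * (c ^+ 2 + 1)))%:~R).
Proof.
move=> pp hodd hc hcong.
have hp : p = (2 * p./2).+1.
  by rewrite -{1}(odd_double_half p) hodd add1n mul2n.
set n := p./2 in hp.
set cr := red p c.
have p1 := prime_gt1 pp.
have p2 : ~~ (p %| 2)%N.
  by rewrite hp in p1 *; apply/negP => /dvdn_leq H; have := H isT; lia.
have two0 : (2 : 'F_p) != 0 by rewrite -(dvdn_pcharf (pchar_Fp pp) 2).
have h16 : (16 : 'F_p) != 0.
  rewrite -(dvdn_pcharf (pchar_Fp pp) 16) (_ : 16 = 2 ^ 4)%N //.
  by rewrite Euclid_dvdX // negb_and p2.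
have [hc2 ec2] := red_exp pp 2 hc.
have [hs es] : pint p (c ^+ 2 + 1) /\ red p (c ^+ 2 + 1) = cr ^+ 2 + 1.
  have [h1 e1] := red_one pp; have [h3 e3] := red_add pp hc2 h1.
  by rewrite e3 ec2 e1.
have [hcs ecs] := red_mul pp hc hs.
have [cr0 s0] : cr != 0 /\ cr ^+ 2 + 1 != 0.
  move: hcong; rewrite (congr_red pp hcs (proj1 (red_zero pp))) ecs es.
  by rewrite (proj2 (red_zero pp)) mulf_eq0 => /norP.
have [h16q e16] := red_nat pp 16.
have [hT eT] := red_mul pp h16q hs.
rewrite e16 es in eT.
have T0 : (16 : 'F_p) * (cr ^+ 2 + 1) != 0 by rewrite mulf_neq0.
have t1 k : pint p ('C(4 * k, 2 * k)%:R * (c ^+ 2 / (16 * (c ^+ 2 + 1))) ^+ k) /\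
   red p ('C(4 * k, 2 * k)%:R * (c ^+ 2 / (16 * (c ^+ 2 + 1))) ^+ k)
   = 'C(4 * k, 2 * k)%:R * (cr ^+ 2 / (16 * (cr ^+ 2 + 1))) ^+ k.
  have T0' : red p (16 * (c ^+ 2 + 1)) != 0 by rewrite eT.
  have [hTi eTi] := red_inv pp hT T0'.
  have [hq eq] := red_mul pp hc2 hTi.
  have [hqk eqk] := red_exp pp k hq.
  have [hC eC] := red_nat pp 'C(4 * k, 2 * k).
  have [hr er] := red_mul pp hC hqk.
  by split => //; rewrite er eC eqk eq ec2 eTi eT.
have t2 k : pint p ('C(4 * k, 2 * k)%:R / (16 * (c ^+ 2 + 1)) ^+ k) /\
   red p ('C(4 * k, 2 * k)%:R / (16 * (c ^+ 2 + 1)) ^+ k)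
   = 'C(4 * k, 2 * k)%:R / (16 * (cr ^+ 2 + 1)) ^+ k.
  have [hTk eTk] := red_exp pp k hT.
  have T0' : red p ((16 * (c ^+ 2 + 1)) ^+ k) != 0 by rewrite eTk eT expf_neq0.
  have [hTi eTi] := red_inv pp hTk T0'.
  have [hC eC] := red_nat pp 'C(4 * k, 2 * k).
  have [hr er] := red_mul pp hC hTi.
  by split => //; rewrite er eC eTi eTk eT.
have [hS1 eS1] := red_sum pp (p %/ 4).+1 (fun k => proj1 (t1 k)).
have [hS2 eS2] := red_sum pp (p %/ 4).+1 (fun k => proj1 (t2 k)).
have [hL eL] := red_mul pp hS1 hS2.
have [h2q e2q] := red_nat pp 2.
have [hA eA] := red_mul pp h2q hs.
rewrite e2q es in eA.
have A0 : (2 : 'F_p) * (cr ^+ 2 + 1) != 0 by rewrite mulf_neq0.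
rewrite /legendre (congr_red pp hA (proj1 (red_zero pp))) eA (proj2 (red_zero pp)) (negbTE A0).
have ex : [exists x : 'I_p, congr_p p ((nat_of_ord x)%:R ^+ 2) (2 * (c ^+ 2 + 1))]
   = [exists x : 'I_p, ((nat_of_ord x)%:R : 'F_p) ^+ 2 == 2 * (cr ^+ 2 + 1)].
  apply: eq_existsb => x.
  have [hx ex] := red_nat pp x.
  have [hx2 ex2] := red_exp pp 2 hx.
  by rewrite (congr_red pp hx2 hA) ex2 ex eA.
rewrite ex.
set LHS := (_ * _)%R.
have hI (z : int) := red_int pp z.
case: existsP => [[x /eqP hx] | nx].
  rewrite (congr_red pp hL (proj1 (hI 1))) (proj2 (hI 1)) /LHS eL eS1 eS2.
  rewrite (eq_bigr _ (fun k _ => proj2 (t1 k))) (eq_bigr _ (fun k _ => proj2 (t2 k))).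
  rewrite (mainFp pp hp cr0 s0) -exprMn (euler1 pp hp A0) //.
  by exists x.
rewrite (congr_red pp hL (proj1 (hI (-1)))) (proj2 (hI (-1))) /LHS eL eS1 eS2.
rewrite (eq_bigr _ (fun k _ => proj2 (t1 k))) (eq_bigr _ (fun k _ => proj2 (t2 k))).
rewrite (mainFp pp hp cr0 s0) -exprMn (euler2 pp hp A0) //.
by move=> [x hx]; apply: nx; exists x; apply/eqP.
Qed.
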